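(* Let $\varphi$ be a non-trivial primitive Dirichlet character of conductor $f$, and let $N,M,L$ be positive integers with $f^2ML\mid N$ and $(fM,L)=1$. Then $12\,\tilde\beta_{\Gamma_0(N),\varphi,M,L}\in\mathbb{Z}[\zeta_f,\varphi]$.
   Context: $T_1=\prod_{l\mid M,\ l\nmid f}l$, $T_2=\prod_{q\mid L}q$ (over primes). $\xi$ is the primitive character associated to $\varphi^2$, of conductor $n$; $\tau(\chi)$ is the Gauss sum; $B_2(\chi)=m\sum_{a=0}^{m-1}\chi(a)((a/m)^2-a/m+1/6)$ for primitive $\chi$ of conductor $m$. $S_\varphi$ is the set of primes $q\mid T_2$ with $\varphi(q)=\pm1$ and $\phi(T_{2,\varphi})=\prod_{q\in S_\varphi}(q-1)$. For $p\mid f$, $\delta_p=1$ if $\nu_p(M)=0$ and $\nu_p(N/f^2)\ge1$, otherwise $\delta_p=0$. $\beta_{\Gamma_0(N),\varphi,M,L}=\frac{f^3T_1\phi(T_{2,\varphi})}{4n}\big(\prod_{p\mid f}p^{\nu_p(M)+\delta_p}\big)\frac{\tau(\varphi^{-1})}{\tau(\xi^{-1})}B_2(\xi^{-1})\prod_{p\mid fT_1}(1-\xi(p)p^{-2})$ and $\tilde\beta_{\Gamma_0(N),\varphi,M,L}=fT_1\beta_{\Gamma_0(N),\varphi,M,L}$. *)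

(* Defs.v *)
From HB Require Import structures.
From mathcomp Require Import all_boot all_order all_algebra.
From mathcomp Require Import algC.
Set Implicit Arguments. Unset Strict Implicit. Unset Printing Implicit Defensive.
Import Order.TTheory GRing.Theory Num.Theory.
Local Open Scope ring_scope.

Definition is_dchar (m : nat) (chi : nat -> algC) : Prop :=
  [/\ (0 < m)%N, chi 1%N = 1,
      (forall a b : nat, chi (a * b)%N = chi a * chi b),
      (forall a : nat, chi (a + m)%N = chi a)
    & (forall a : nat, (chi a == 0) = ~~ coprime a m)].

Definition primitive_dchar (m : nat) (chi : nat -> algC) : Prop :=
  is_dchar m chi /\
  forall d : nat, (d %| m)%N -> (d < m)%N ->
    ~ (forall a b : nat, coprime a m -> coprime b m ->
         a = b %[mod d] -> chi a = chi b).

Definition nontrivial_dchar (m : nat) (chi : nat -> algC) : Prop :=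
  exists a : nat, coprime a m /\ chi a != 1.

(* inverse character (chi^{-1}(a) = chi(a)^{-1}, and 0 where chi vanishes) *)
Definition dchar_inv (chi : nat -> algC) : nat -> algC := fun a => (chi a)^-1.

Definition gauss_sum (m : nat) (chi : nat -> algC) (z : algC) : algC :=
  \sum_(a < m) chi a * z ^+ a.

Definition B2 (m : nat) (chi : nat -> algC) : algC :=
  m%:R * \sum_(a < m) chi a *
     ((a%:R / m%:R) ^+ 2 - a%:R / m%:R + 1 / 6%:R).

Definition in_gen_subring (gens : algC -> Prop) (x : algC) : Prop :=
  forall S : pred algC,
    1 \in S ->
    {in S &, forall u v, u - v \in S} ->
    {in S &, forall u v, u * v \in S} ->
    (forall g, gens g -> g \in S) ->
    x \in S.

Definition Zzeta_phi (z : algC) (phi : nat -> algC) : algC -> Prop :=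
  in_gen_subring (fun g => g = z \/ exists a : nat, g = phi a).

Definition T1 (f M : nat) : nat := (\prod_(l <- primes M | ~~ (l %| f)%N) l)%N.

(* phi(T_{2,phi}) = prod over primes q | L with phi(q) = +-1 of (q-1) *)
Definition unit_val (phi : nat -> algC) (q : nat) : bool :=
  (phi q == 1) || (phi q == -1).
Definition phiT2 (phi : nat -> algC) (L : nat) : nat :=
  (\prod_(q <- primes L | unit_val phi q) (q - 1))%N.

Definition delta (f N M p : nat) : nat :=
  ((logn p M == 0%N) && (0 < logn p (N %/ f ^ 2))%N : bool).

(* beta_{Gamma_0(N),phi,M,L}; z is zeta_f, and zeta_n := z^(f/n). *)
Definition beta (f N M L n : nat) (phi xi : nat -> algC) (z : algC) : algC :=
  ((f ^ 3 * T1 f M * phiT2 phi L)%N%:R / (4 * n)%N%:R)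
  * (\prod_(p <- primes f) p ^ (logn p M + delta f N M p))%N%:R
  * (gauss_sum f (dchar_inv phi) z / gauss_sum n (dchar_inv xi) (z ^+ (f %/ n)))
  * B2 n (dchar_inv xi)
  * \prod_(p <- primes (f * T1 f M)) (1 - xi p / (p%:R) ^+ 2).

Definition beta_tilde (f N M L n : nat) (phi xi : nat -> algC) (z : algC) : algC :=
  (f * T1 f M)%N%:R * beta f N M L n phi xi z.

(* Main.v *)
Require Import Defs.
From HB Require Import structures.
From mathcomp Require Import all_boot all_order all_algebra.
From mathcomp Require Import algC zify ring.
Import Order.TTheory GRing.Theory Num.Theory.
Set Implicit Arguments. Unset Strict Implicit.
Local Open Scope ring_scope.

Lemma dchar_period m chi : is_dchar m chi -> forall a k, chi (a + k * m)%N = chi a.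
Proof.
case=> _ _ _ Hp _ a; elim=> [|k IH]; first by rewrite mul0n addn0.
by rewrite mulSn addnCA addnC Hp IH.
Qed.

Lemma dchar_mod m chi : is_dchar m chi -> forall a, chi a = chi (a %% m)%N.
Proof. by move=> H a; rewrite {1}(div.divn_eq a m) addnC dchar_period. Qed.

Lemma dchar_eqmod m chi : is_dchar m chi -> forall a b, (a = b %[mod m])%N -> chi a = chi b.
Proof. by move=> H a b e; rewrite (dchar_mod H a) e -dchar_mod. Qed.

Lemma inv_mod_ex m a : (0 < m)%N -> coprime a m -> exists b, (a * b = 1 %[mod m])%N.
Proof.
move=> m0 co.
case: (posnP a) => [a0|apos].
  move: co; rewrite a0 /coprime gcd0n => /eqP ->; exists 0%N; by rewrite !modn1.
case: (egcdnP m apos) => km kn E _.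
move: co; rewrite /coprime => /eqP g1; rewrite g1 in E.
exists km; rewrite mulnC E; by rewrite -modnDml modnMl add0n.
Qed.

Lemma dchar_inv_val m chi a : is_dchar m chi -> coprime a m ->
  exists b, chi a * chi b = 1.
Proof.
move=> H co; have [m0 H1 Hm _ _] := H.
have [b Hb] := inv_mod_ex m0 co; exists b.
by rewrite -Hm (dchar_eqmod H Hb) H1.
Qed.

Lemma dchar_zero m chi a : is_dchar m chi -> ~~ coprime a m -> chi a = 0.
Proof. by case=> _ _ _ _ Hz co; apply/eqP; rewrite Hz. Qed.

Lemma dchar_mul m chi a b : is_dchar m chi -> chi (a * b)%N = chi a * chi b.
Proof. by case=> _ _ H _ _. Qed.

Lemma coprime_mod1 x n : (x = 1 %[mod n])%N -> coprime x n.
Proof. by move=> e; rewrite -coprime_modl e coprime_modl coprime1n. Qed.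

Lemma induced_of_trivial n chi d : is_dchar n chi -> (d %| n)%N ->
  (forall c, coprime c n -> (c = 1 %[mod d])%N -> chi c = 1) ->
  forall a b : nat, coprime a n -> coprime b n -> (a = b %[mod d])%N -> chi a = chi b.
Proof.
move=> H dn Hc a b ca cb ab.
have n0 : (0 < n)%N by case: H.
have [b' Hb'] := inv_mod_ex n0 cb.
have cb' : coprime b' n by have := coprime_mod1 Hb'; rewrite coprimeMl => /andP[].
have e1 : (a * b' = 1 %[mod d])%N.
  by rewrite -modnMml ab modnMml -(modn_dvdm _ dn) Hb' (modn_dvdm _ dn).
have := Hc _ _ e1; rewrite coprimeMl ca cb' => /(_ erefl).
have := dchar_eqmod H Hb'; have [_ H1 _ _ _] := H; rewrite H1 !(dchar_mul _ _ H) => Hbb Hab.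
by rewrite -[chi a]mulr1 -Hbb mulrA mulrAC Hab mul1r.
Qed.

Lemma sum_reindex n c (F : nat -> algC) : (0 < n)%N -> coprime c n ->
  (forall x, F x = F (x %% n)%N) ->
  \sum_(a < n) F (c * a)%N = \sum_(a < n) F a.
Proof.
move=> n0 co HF.
have [c' Hc'] := inv_mod_ex n0 co.
pose h (a : 'I_n) : 'I_n := Ordinal (ltn_pmod (c * a) n0).
have hinj : injective h.
  move=> x y /(congr1 val) /= e.
  have e2 : (c' * (c * x) = c' * (c * y) %[mod n])%N by rewrite -modnMmr e modnMmr.
  have key t : (c' * (c * t) = t %[mod n])%N.
    by rewrite mulnA -modnMml [(c' * c)%N]mulnC Hc' modnMml mul1n.
  rewrite !key in e2.
  by apply/val_inj; rewrite /= -(modn_small (ltn_ord x)) -(modn_small (ltn_ord y)).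
symmetry; rewrite (reindex_inj hinj) /=; apply: eq_bigr => a _.
by rewrite [RHS]HF.
Qed.

Lemma geom_sum n (w : algC) k : n.-primitive_root w ->
  \sum_(b < n) w ^+ (b * k)%N = if (n %| k)%N then n%:R else 0.
Proof.
move=> pw.
have n0 : (0 < n)%N by apply: prim_order_gt0 pw.
case: ifP => nk.
  rewrite (eq_bigr (fun _ => 1)) ?sumr_const ?card_ord //.
  move=> b _; rewrite -(prim_expr_mod pw); move: nk => /dvdnP[q ->].
  by rewrite mulnA modnMl expr0.
have x1 : w ^+ k != 1.
  apply/negP; rewrite -(expr0 w) (eq_prim_root_expr pw) mod0n => /eqP e.
  by move: nk; rewrite /dvdn e eqxx.
move: n0 pw nk; case: n => // n' _ pw nk.
have := expfS_eq1 (w ^+ k) n'; rewrite -exprM mulnC exprM (prim_expr_order pw) expr1n eqxx.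
rewrite (negbTE x1) /= => /esym/eqP S0; rewrite -[RHS]S0.
by apply: eq_bigr => b _; rewrite mulnC exprM.
Qed.

Lemma dinv_val n chi b b' : is_dchar n chi -> (b * b' = 1 %[mod n])%N ->
  dchar_inv chi b = chi b'.
Proof.
move=> H e; have [_ H1 _ _ _] := H.
have e1 : chi b * chi b' = 1 by rewrite -(dchar_mul _ _ H) (dchar_eqmod H e) H1.
have nz : chi b != 0 by apply/negP => /eqP z; move: e1; rewrite z mul0r => /eqP; rewrite eq_sym oner_eq0.
by rewrite /dchar_inv; apply: (mulfI nz); rewrite mulfV.
Qed.

Lemma gauss_twist_coprime n chi (w : algC) b : is_dchar n chi -> n.-primitive_root w ->
  coprime b n ->
  \sum_(a < n) chi a * w ^+ (a * b)%N = dchar_inv chi b * gauss_sum n chi w.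
Proof.
move=> H pw co.
have n0 : (0 < n)%N by case: H.
have [b' Hb'] := inv_mod_ex n0 co.
have R : \sum_(a < n) chi (b * a)%N * w ^+ (b * a)%N = \sum_(a < n) chi a * w ^+ a.
  apply: (sum_reindex (F := fun x => chi x * w ^+ x)) => // x.
  by rewrite -(dchar_mod H) (prim_expr_mod pw).
rewrite (dinv_val H Hb') /gauss_sum -R mulr_sumr.
apply: eq_bigr => a _; rewrite mulrA -(dchar_mul _ _ H) [(a * b)%N]mulnC; congr (_ * _).
apply: (dchar_eqmod H).
by rewrite mulnA -modnMml [(b' * b)%N]mulnC Hb' modnMml mul1n.
Qed.

Lemma gauss_twist_noncoprime n chi (w : algC) b : primitive_dchar n chi ->
  n.-primitive_root w -> ~~ coprime b n ->
  \sum_(a < n) chi a * w ^+ (a * b)%N = 0.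
Proof.
case=> H Hprim pw nco.
have n0 : (0 < n)%N by case: H.
set g := gcdn b n.
have g0 : (0 < g)%N by rewrite gcdn_gt0 n0 orbT.
have g1 : (1 < g)%N by move: nco g0; rewrite /coprime -/g; case: g => [|[|]].
set d := (n %/ g)%N.
have ndg : n = (d * g)%N by rewrite divnK // dvdn_gcdr.
have dn : (d %| n)%N by rewrite [X in (_ %| X)%N]ndg dvdn_mulr.
have dlt : (d < n)%N by rewrite ltn_Pdiv.
have bg : b = (b %/ g * g)%N by rewrite divnK // dvdn_gcdl.
apply/eqP; apply/negPn/negP => S0.
apply: (Hprim d dn dlt); apply: (induced_of_trivial H dn) => c cc c1.
have Hw x : w ^+ (c * x * b)%N = w ^+ (x * b)%N.
  rewrite -(prim_expr_mod pw) -[in RHS](prim_expr_mod pw).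
  have cg : (c * g = g %[mod n])%N.
    by rewrite ndg -muln_modl // c1 muln_modl // mul1n.
  rewrite bg; set b2 := (b %/ g)%N.
  have -> : (c * x * (b2 * g) = x * b2 * (c * g))%N by lia.
  by rewrite -modnMmr cg modnMmr mulnA.
have E : \sum_(a < n) chi a * w ^+ (a * b)%N =
         \sum_(a < n) chi (c * a)%N * w ^+ (c * a * b)%N.
  symmetry; apply: (sum_reindex (F := fun x => chi x * w ^+ (x * b)%N)) => // x.
  by rewrite -(dchar_mod H); congr (_ * _); rewrite -[LHS](prim_expr_mod pw) -[RHS](prim_expr_mod pw) modnMml.
have E2 : \sum_(a < n) chi a * w ^+ (a * b)%N =
          chi c * \sum_(a < n) chi a * w ^+ (a * b)%N.
  rewrite {1}E mulr_sumr; apply: eq_bigr => a _.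
  by rewrite (dchar_mul _ _ H) Hw mulrA.
apply: (mulIf S0); by rewrite mul1r -E2.
Qed.

Lemma gauss_twist n chi (w : algC) b : primitive_dchar n chi ->
  n.-primitive_root w ->
  \sum_(a < n) chi a * w ^+ (a * b)%N = dchar_inv chi b * gauss_sum n chi w.
Proof.
move=> Hp pw; case: (boolP (coprime b n)) => co.
  by apply: gauss_twist_coprime => //; case: Hp.
rewrite (gauss_twist_noncoprime Hp pw co) /dchar_inv.
by rewrite (dchar_zero (proj1 Hp) co) invr0 mul0r.
Qed.

Lemma gauss_prod n chi (w : algC) : primitive_dchar n chi ->
  n.-primitive_root w ->
  gauss_sum n (dchar_inv chi) w * gauss_sum n chi w = chi n.-1 * n%:R.
Proof.
move=> Hp pw.
have n0 : (0 < n)%N by case: Hp => -[].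
rewrite {1}/gauss_sum mulr_suml.
rewrite (eq_bigr (fun b : 'I_n => \sum_(a < n) chi a * w ^+ (a.+1 * b)%N)); last first.
  move=> b _; rewrite mulrAC -(gauss_twist b Hp pw) mulr_suml; apply: eq_bigr => a _.
  by rewrite -mulrA -exprD mulSn addnC.
rewrite exchange_big /=.
rewrite (eq_bigr (fun a : 'I_n => chi a * (if (n %| a.+1)%N then n%:R else 0))); last first.
  by move=> a _; rewrite -mulr_sumr -(geom_sum _ pw); congr (_ * _); apply: eq_bigr => b _; rewrite mulnC.
move: n0 Hp pw; case: n => // n' _ Hp pw.
rewrite (bigD1 ord_max) //= dvdnn big1 ?addr0 //.
move=> a /eqP ne; case: ifP => [/dvdn_leq|]; last by rewrite mulr0.
move=> /(_ erefl) le; exfalso; apply: ne; apply/val_inj => /=.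
by have := ltn_ord a; lia.
Qed.

Lemma cond_dvd f n phi xi : is_dchar f phi -> primitive_dchar n xi ->
  (forall a : nat, coprime a f -> xi a = phi a ^+ 2) -> (n %| f)%N.
Proof.
move=> Hf [Hn Hprim] Hx.
have f0 : (0 < f)%N by case: Hf.
have n0 : (0 < n)%N by case: Hn.
set g := gcdn n f.
case: (boolP (g == n)) => [/eqP <-|gn]; first by rewrite dvdn_gcdr.
have gdn : (g %| n)%N by rewrite dvdn_gcdl.
have glt : (g < n)%N by rewrite ltn_neqAle gn dvdn_leq.
exfalso; apply: (Hprim g gdn glt); apply: (induced_of_trivial Hn gdn) => c cc c1.
have c0 : (0 < c)%N.
  case: c cc c1 => // cc _; move: cc; rewrite /coprime gcd0n => /eqP n1.
  by move: glt; rewrite n1 ltnS leqn0 /g n1 gcd1n.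
have : (g %| c - 1)%N by rewrite -eqn_mod_dvd // c1.
case/dvdnP => k Hk.
case: (egcdnP n f0) => km kn E _.
rewrite gcdnC -/g in E.
have Hxe : (c + k * kn * n = 1 + k * km * f)%N.
  have -> : (k * km * f = k * (km * f))%N by rewrite mulnA.
  rewrite E mulnDr -Hk; lia.
have [_ H1 _ _ _] := Hf.
rewrite -(dchar_period Hn c (k * kn)) Hxe Hx.
  by rewrite (dchar_period Hf) H1 expr1n.
by apply: coprime_mod1; rewrite -modnDmr modnMl addn0.
Qed.

Lemma lift_coprime n f a : (0 < f)%N -> (n %| f)%N -> coprime a n ->
  exists x, (x = a %[mod n])%N /\ coprime x f.
Proof.
move=> f0 nf an.
pose t := (\prod_(p <- primes f | ~~ (p %| a)%N) p)%N.
exists (a + n * t)%N; split; first by rewrite -modnDmr modnMr addn0.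
apply/negPn/negP => nco.
have g1 : (1 < gcdn (a + n * t) f)%N.
  by move: nco; rewrite /coprime; have := gcdn_gt0 (a + n * t) f; rewrite f0 orbT; case: gcdn => [|[|]].
set p := pdiv (gcdn (a + n * t) f).
have pp : prime p := pdiv_prime g1.
have pg : (p %| gcdn (a + n * t) f)%N := pdiv_dvd _.
have px : (p %| a + n * t)%N by apply: dvdn_trans pg (dvdn_gcdl _ _).
have pf : (p %| f)%N by apply: dvdn_trans pg (dvdn_gcdr _ _).
have ptE : (p %| t)%N = has (fun q => p %| q)%N [seq q <- primes f | ~~ (q %| a)%N].
  by rewrite /t Euclid_dvd_prod // -big_filter big_has.
case: (boolP (p %| a)%N) => pa.
  have pnt : ~~ (p %| n * t)%N.
    rewrite Euclid_dvdM // negb_or; apply/andP; split.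
      apply/negP => pn; have : (p %| gcdn a n)%N by rewrite dvdn_gcd pa pn.
      by move: an; rewrite /coprime => /eqP ->; rewrite dvdn1 => /eqP p1; move: pp; rewrite p1.
    rewrite ptE; apply/hasPn => q; rewrite mem_filter mem_primes => /and4P[qa qp _ _].
    by rewrite dvdn_prime2 //; apply/negP => /eqP pq; move: qa; rewrite -pq pa.
  by move: px; rewrite dvdn_addr // (negbTE pnt).
have : (p %| t)%N.
  rewrite ptE; apply/hasP; exists p => //.
  by rewrite mem_filter pa mem_primes pp f0 pf.
move=> pt; move: px; rewrite dvdn_addl ?(negbTE pa) //.
by apply: dvdn_mull.
Qed.

Definition ring_closed (S : pred algC) : Prop :=
  [/\ 1 \in S, {in S &, forall u v, u - v \in S} & {in S &, forall u v, u * v \in S}].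

Section Closure.
Lemma rc0 S : ring_closed S -> 0 \in S.
Proof. by case=> H1 HB _; rewrite -(subrr 1) HB. Qed.
Lemma rcN S x : ring_closed S -> x \in S -> - x \in S.
Proof. move=> H Hx; have [_ HB _] := H; by rewrite -sub0r HB // rc0. Qed.
Lemma rcD S x y : ring_closed S -> x \in S -> y \in S -> x + y \in S.
Proof. move=> H Hx Hy; have [_ HB _] := H; by rewrite -[y]opprK HB // rcN. Qed.
Lemma rcB S x y : ring_closed S -> x \in S -> y \in S -> x - y \in S.
Proof. by case=> _ HB _ ; apply: HB. Qed.
Lemma rcM S x y : ring_closed S -> x \in S -> y \in S -> x * y \in S.
Proof. by case=> _ _ HM; apply: HM. Qed.
Lemma rc1 S : ring_closed S -> 1 \in S.
Proof. by case. Qed.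
Lemma rcnat S k : ring_closed S -> k%:R \in S.
Proof. move=> H; elim: k => [|k IH]; first exact: rc0. by rewrite -addn1 natrD rcD // rc1. Qed.
Lemma rcX S x k : ring_closed S -> x \in S -> x ^+ k \in S.
Proof. move=> H Hx; elim: k => [|k IH]; first by rewrite expr0 rc1. by rewrite exprS rcM. Qed.
Lemma rc_sum S (I : Type) (r : seq I) (P : pred I) (F : I -> algC) : ring_closed S ->
  (forall i, P i -> F i \in S) -> \sum_(i <- r | P i) F i \in S.
Proof. move=> H HF; apply: (big_ind (fun x => x \in S)) => //; [exact: rc0 | move=> *; exact: rcD]. Qed.
Lemma rc_prod S (I : Type) (r : seq I) (P : pred I) (F : I -> algC) : ring_closed S ->
  (forall i, P i -> F i \in S) -> \prod_(i <- r | P i) F i \in S.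
Proof. move=> H HF; apply: (big_ind (fun x => x \in S)) => //; [exact: rc1 | move=> *; exact: rcM]. Qed.
End Closure.

Lemma prod_primes_dvd (s : seq nat) X : uniq s -> all prime s ->
  (forall p, p \in s -> p %| X)%N -> (\prod_(p <- s) p %| X)%N.
Proof.
elim: s => [|p s IH] /=; first by rewrite big_nil dvd1n.
move=> /andP[ps us] /andP[pp ps'] Hd.
rewrite big_cons Gauss_dvd; last first.
  rewrite prime_coprime // Euclid_dvd_prod // big_has; apply/hasPn => q qs.
  move: ps'; move/allP/(_ q qs) => qp.
  by rewrite dvdn_prime2 //; apply/negP => /eqP pq; move: ps; rewrite pq qs.
by rewrite Hd ?mem_head // IH // => q qs; apply: Hd; rewrite inE qs orbT.
Qed.

Lemma dinv_dchar n chi : is_dchar n chi -> is_dchar n (dchar_inv chi).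
Proof.
case=> n0 H1 Hm Hp Hz; split => //; rewrite /dchar_inv.
- by rewrite H1 invr1.
- by move=> a b; rewrite Hm invfM.
- by move=> a; rewrite Hp.
- by move=> a; rewrite invr_eq0 Hz.
Qed.

Lemma dinv_prim n chi : primitive_dchar n chi -> primitive_dchar n (dchar_inv chi).
Proof.
case=> H Hp; split; first exact: dinv_dchar.
move=> d dn dlt Hind; apply: (Hp d dn dlt) => a b ca cb ab.
by apply: invr_inj; apply: Hind.
Qed.

Lemma coprime_pred n : (0 < n)%N -> coprime n.-1 n.
Proof. by case: n => // n _; rewrite /= coprimenS. Qed.

Theorem mainTheorem7 (f N M L n : nat) (phi xi : nat -> algC) (z : algC) :
  primitive_dchar f phi ->
  nontrivial_dchar f phi ->
  (0 < N)%N -> (0 < M)%N -> (0 < L)%N ->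
  (f ^ 2 * M * L %| N)%N ->
  coprime (f * M) L ->
  (* xi : the primitive character (of conductor n) associated to phi^2 *)
  primitive_dchar n xi ->
  (forall a : nat, coprime a f -> xi a = phi a ^+ 2) ->
  (* zeta_f : a primitive f-th root of unity *)
  f.-primitive_root z ->
  Zzeta_phi z phi (12%:R * beta_tilde f N M L n phi xi z).
Proof.
move=> Hphi Hnt N0 M0 L0 Hdiv Hco Hxi Hx pz S S1 SB SM Sg.
have HS : ring_closed S by [].
have Sz : z \in S by apply: Sg; left.
have Sphi a : phi a \in S by apply: Sg; right; exists a.
have Hf := proj1 Hphi; have Hn := proj1 Hxi.
have f0 : (0 < f)%N by case: Hf.
have n0 : (0 < n)%N by case: Hn.
have nf : (n %| f)%N := cond_dvd Hf Hxi Hx.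
set w := z ^+ (f %/ n).
have pw : n.-primitive_root w := dvdn_prim_root pz nf.
have Sw : w \in S by apply: rcX.
have Sphii a : dchar_inv phi a \in S.
  case: (boolP (coprime a f)) => co.
    by have [b Hb] := inv_mod_ex f0 co; rewrite (dinv_val Hf Hb).
  by rewrite /dchar_inv (dchar_zero Hf co) invr0 rc0.
have Sxi a : xi a \in S.
  case: (boolP (coprime a n)) => co; last by rewrite (dchar_zero Hn co) rc0.
  have [x [xa xf]] := lift_coprime f0 nf co.
  by rewrite (dchar_eqmod Hn (esym xa)) Hx // rcX.
have Sxii a : dchar_inv xi a \in S.
  case: (boolP (coprime a n)) => co.
    by have [b Hb] := inv_mod_ex n0 co; rewrite (dinv_val Hn Hb).
  by rewrite /dchar_inv (dchar_zero Hn co) invr0 rc0.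
have Stau1 : gauss_sum f (dchar_inv phi) z \in S.
  by apply: rc_sum => // i _; rewrite rcM // rcX.
have Stau3 : gauss_sum n xi w \in S.
  by apply: rc_sum => // i _; rewrite rcM // rcX.
have Hprod := gauss_prod Hxi pw.
have xn : xi n.-1 != 0 by have [_ _ _ _ Hz] := Hn; rewrite Hz coprime_pred.
have nR : n%:R != 0 :> algC by rewrite pnatr_eq0 -lt0n.
have Htau : (gauss_sum n (dchar_inv xi) w)^-1 = gauss_sum n xi w * dchar_inv xi n.-1 / n%:R.
  have t2 : gauss_sum n (dchar_inv xi) w != 0.
    apply/negP => /eqP t0; move: Hprod; rewrite t0 mul0r => /esym/eqP.
    by rewrite mulf_eq0 (negbTE xn) (negbTE nR).
  apply: (mulfI t2); rewrite mulfV // !mulrA Hprod /dchar_inv.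
  by field; rewrite xn nR.
set T := T1 f M.
have T0 : (0 < T)%N.
  rewrite /T /T1 big_seq_cond; apply: prodn_cond_gt0 => l /andP[].
  by rewrite mem_primes => /andP[/prime_gt0].
set r := primes (f * T).
set P := fun p => ~~ (p %| n)%N.
set Ep := \prod_(p <- r | P p) (p%:R ^+ 2 - xi p).
set Dsq := (\prod_(p <- r | P p) (p ^ 2))%N.
set D1 := (\prod_(p <- r | P p) p)%N.
have HE : \prod_(p <- r) (1 - xi p / p%:R ^+ 2) = Ep / Dsq%:R.
  rewrite /Ep /Dsq natr_prod -prodf_div (bigID P) /= [X in _ * X]big_seq_cond [X in _ * X]big1 ?mulr1.
    rewrite big_seq_cond [RHS]big_seq_cond; apply: eq_bigr => p /andP[pr _].
    have p0 : p%:R != 0 :> algC by move: pr; rewrite mem_primes pnatr_eq0 => /andP[/prime_gt0]; rewrite lt0n.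
    by rewrite natrX; field; rewrite p0.
  move=> p /andP[pr /negPn pn].
  have pp : prime p by move: pr; rewrite mem_primes => /and3P[].
  have : ~~ coprime p n by rewrite prime_coprime // pn.
  by move/(dchar_zero Hn) ->; rewrite mul0r subr0.
have DsqE : Dsq = (D1 ^ 2)%N.
  by rewrite /Dsq /D1 -mulnn -big_split /=; apply: eq_bigr => p _; rewrite mulnn.
have Dsq0 : Dsq%:R != 0 :> algC.
  rewrite pnatr_eq0 -lt0n /Dsq big_seq_cond; apply: prodn_cond_gt0 => p /andP[].
  by rewrite mem_primes => /andP[/prime_gt0 pg _] _; rewrite expn_gt0 pg.
have D1d : (D1 %| f %/ n * T)%N.
  rewrite /D1 -big_filter; apply: prod_primes_dvd.
  - by rewrite filter_uniq // primes_uniq.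
  - by apply/allP => p; rewrite mem_filter mem_primes => /andP[_ /and3P[]].
  move=> p; rewrite mem_filter mem_primes => /andP[pn /and3P[pp _ pfT]].
  move: pfT; rewrite -{1}(divnK nf) [(f %/ n * n)%N]mulnC -mulnA Euclid_dvdM //.
  by rewrite (negbTE pn).
have Ep_in : Ep \in S by apply: rc_prod => // p _; rewrite rcB // rcX // rcnat.
have Q_in := @rcnat S (\prod_(p <- primes f) p ^ (logn p M + delta f N M p))%N HS.
rewrite /beta_tilde /beta -/T -/r HE Htau.
case: (ltngtP n 1) => [|n2|n1]; first by rewrite ltnNge n0.
  have sum0 : \sum_(a < n) dchar_inv xi a = 0.
    have nco : ~~ coprime 0 n by rewrite /coprime gcd0n neq_ltn n2 orbT.
    rewrite -[RHS](gauss_twist_noncoprime (dinv_prim Hxi) pw nco).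
    by apply: eq_bigr => a _; rewrite muln0 expr0 mulr1.
  set B' := \sum_(a < n) dchar_inv xi a * (a%:R ^+ 2 - a%:R * n%:R).
  have HB : B2 n (dchar_inv xi) = B' / n%:R.
    have -> : B2 n (dchar_inv xi) = B' / n%:R + n%:R / 6%:R * \sum_(a < n) dchar_inv xi a.
      rewrite /B2 /B' mulr_sumr mulr_suml mulr_sumr -big_split; apply: eq_bigr => a _ /=.
      by field; rewrite nR.
    by rewrite sum0 mulr0 addr0.
  have B'_in : B' \in S.
    by apply: rc_sum => // a _; rewrite rcM // rcB // ?rcX ?rcM // rcnat.
  set m := (f %/ n)%N.
  have Kd : (n ^ 3 * Dsq %| f ^ 4 * T ^ 2)%N.
    have -> : (f ^ 4 * T ^ 2 = n ^ 3 * ((m * T) ^ 2 * (n * m ^ 2)))%N.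
      by rewrite -(divnK nf) -/m; ring.
    by rewrite dvdn_pmul2l ?expn_gt0 ?n0 // DsqE dvdn_mulr // dvdn_exp2r.
  set K := ((f ^ 4 * T ^ 2) %/ (n ^ 3 * Dsq))%N.
  have KR : K%:R = (f ^ 4 * T ^ 2)%:R / (n ^ 3 * Dsq)%:R :> algC := natf_div _ Kd.
  rewrite HB.
  set Q := (\prod_(p <- primes f) p ^ (logn p M + delta f N M p))%N.
  set P2 := phiT2 phi L.
  set t1 := gauss_sum f (dchar_inv phi) z.
  set t3 := gauss_sum n xi w.
  set c := dchar_inv xi n.-1.
  have -> : 12 * ((f * T)%:R * ((f ^ 3 * T * P2)%:R / (4 * n)%:R * Q%:R *
      (t1 * (t3 * c / n%:R)) * (B' / n%:R) * (Ep / Dsq%:R))) =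
      (3 * P2 * K)%:R * (Q%:R * t1 * t3 * c * B' * Ep).
    rewrite !natrM KR !natrM ?natrX; field.
    by rewrite Dsq0 nR.
  apply: rcM => //; first exact: rcnat.
  by repeat (apply: rcM => //); apply: Sxii.
have f1 : f != 1%N.
  apply/negP => /eqP f1; have [a [_ pa]] := Hnt; move: pa.
  have [_ H1 _ _ _] := Hf.
  have p0 : phi 0 = 1 by rewrite -(dchar_period Hf 0 1) add0n mul1n f1 H1.
  by rewrite (dchar_mod Hf) f1 modn1 p0 eqxx.
have xip p : xi p = 1.
  have [_ H1 _ _ _] := Hn.
  have x0 : xi 0 = 1 by rewrite -(dchar_period Hn 0 1) add0n mul1n n1 H1.
  by rewrite (dchar_mod Hn) n1 modn1 x0.
have HB : B2 n (dchar_inv xi) = 1 / 6%:R.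
  by rewrite /B2 n1 big_ord1 /dchar_inv xip invr1 /=; field.
set Enat := (\prod_(p <- r | P p) (p ^ 2 - 1))%N.
have EpE : Ep = Enat%:R.
  rewrite /Ep /Enat natr_prod big_seq_cond [RHS]big_seq_cond; apply: eq_bigr => p /andP[pr _].
  have p0 : (0 < p)%N by move: pr; rewrite mem_primes => /andP[/prime_gt0].
  by rewrite xip natrB ?expn_gt0 ?p0 // natrX.
have Dd : (Dsq %| (f * T) ^ 2)%N by rewrite DsqE dvdn_exp2r // -(divn1 f) -n1.
have Ed : (2 %| f ^ 2 * Enat)%N.
  case: (boolP (odd f)) => fo; last by rewrite dvdn_mulr // dvdn2 oddX /= (negbTE fo).
  apply: dvdn_mull.
  have f1' : (1 < f)%N by rewrite ltn_neqAle eq_sym f1 f0.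
  set p := pdiv f.
  have pp : prime p := pdiv_prime f1'.
  have pf : (p %| f)%N := pdiv_dvd f.
  have po : odd p.
    case: (boolP (odd p)) => // pe; exfalso.
    have : (2 %| p)%N by rewrite dvdn2.
    rewrite dvdn_prime2 // => /eqP p2.
    by move: fo; rewrite -[odd f]negbK -dvdn2 p2 pf.
  have pin : p \in [seq q <- r | P q].
    rewrite mem_filter /P n1 mem_primes pp muln_gt0 f0 T0 dvdn_mulr // dvdn1.
    by rewrite (gtn_eqF (prime_gt1 pp)).
  have : (p ^ 2 - 1 %| Enat)%N.
    by rewrite /Enat -big_filter (bigD1_seq p) ?filter_uniq ?primes_uniq //= dvdn_mulr.
  apply: dvdn_trans.
  by rewrite dvdn2 oddB ?expn_gt0 ?prime_gt0 // oddX po.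
set K1 := ((f ^ 4 * T ^ 2 * Enat) %/ (2 * Dsq))%N.
have Kd : (2 * Dsq %| f ^ 4 * T ^ 2 * Enat)%N.
  have -> : (f ^ 4 * T ^ 2 * Enat = (f * T) ^ 2 * (f ^ 2 * Enat))%N by ring.
  by rewrite mulnC dvdn_mul.
have KR : K1%:R = (f ^ 4 * T ^ 2 * Enat)%:R / (2 * Dsq)%:R :> algC := natf_div _ Kd.
rewrite HB EpE.
set Q := (\prod_(p <- primes f) p ^ (logn p M + delta f N M p))%N.
set P2 := phiT2 phi L.
set t1 := gauss_sum f (dchar_inv phi) z.
set t3 := gauss_sum n xi w.
set c := dchar_inv xi n.-1.
have -> : 12 * ((f * T)%:R * ((f ^ 3 * T * P2)%:R / (4 * n)%:R * Q%:R *
    (t1 * (t3 * c / n%:R)) * (1 / 6%:R) * (Enat%:R / Dsq%:R))) =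
    (P2 * K1)%:R * (Q%:R * t1 * t3 * c).
  rewrite n1 !natrM KR !natrM ?natrX; field.
  exact: Dsq0.
apply: rcM => //; first exact: rcnat.
by repeat (apply: rcM => //); apply: Sxii.
Qed.
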